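(* Let $\gamma\in(-1,1)$ and consider the generalized Clegg integrator (GCI), i.e. the scalar reset system $\dot u_{ci}(t)=e(t)$ when $e(t)\neq 0$, and $u_{ci}(t^+)=\gamma\,u_{ci}(t)$ when $e(t)=0$, subject to the sinusoidal input $e(t)=|E_1|\sin(\omega t)$ with $\omega>0$, satisfying the open-loop stability assumption and the Zeno-free condition stated in the context. Then the steady-state output $u_{ci}(t)$ decomposes as $$u_{ci}(t)=u_i(t)+q_i(t),$$ where $u_i(t)=-|E_1/\omega|\,[\cos(\omega t)-1]$ is the base-linear (pure integrator) output and $q_i(t)$ is the $2\pi/\omega$-periodic square wave $$q_i(t)=\begin{cases}-2|E_1|\gamma(\gamma+1)^{-1}/\omega, & t\in[2k,2k+1)\cdot\pi/\omega,\\ -2|E_1|(\gamma+1)^{-1}/\omega, & t\in[2k+1,2k+2)\cdot\pi/\omega,\end{cases}\qquad k\in\mathbb{N}.$$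
   Context: A reset controller with state $x_c\in\mathbb{R}^{n_c}$, input $e$ and output $v$ is given by $\dot x_c=A_Rx_c+B_Re$ for $t\notin J$, $x_c(t^+)=A_\rho x_c(t)$ for $t\in J$, $v=C_Rx_c+D_Re$, where $J$ is the set of reset instants, i.e. the times at which the reset-triggering signal (here $e$) crosses zero. The GCI is the case $n_c=1$, $A_R=0$, $B_R=1$, $C_R=1$, $D_R=0$, $A_\rho=\gamma\in(-1,1)$. Open-loop stability assumption: $|\lambda(A_\rho e^{A_R\delta})|<1$ for all $\delta>0$ (for all eigenvalues $\lambda$), which guarantees a globally asymptotically stable $2\pi/\omega$-periodic (steady-state) solution. Zeno-free condition: the intervals $t_{i+1}-t_i$ between consecutive reset instants are bounded below by some $\sigma_{\min}>0$. *)

(* Defs.v *)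
From Stdlib Require Export Reals.
From Coquelicot Require Export Coquelicot.
Open Scope R_scope.

Definition gci_input (E1 w : R) (t : R) : R := Rabs E1 * sin (w * t).

(* Convention: u is right-continuous, i.e. at a reset instant t the value u t
   is the post-reset value u(t^+), and the pre-reset value is the left limit. *)
Definition gci_solution (gamma : R) (e : R -> R) (u : R -> R) : Prop :=
  (forall t, 0 < t -> e t <> 0 -> is_derive u t (e t)) /\
  (forall t, 0 <= t -> e t = 0 -> filterlim u (at_right t) (locally (u t))) /\
  (forall t, 0 < t -> e t = 0 ->
     exists l, filterlim u (at_left t) (locally l) /\ u t = gamma * l).

(* Steady state: T-periodic behaviour on [0, +oo). *)
Definition periodic_nonneg (T : R) (u : R -> R) : Prop :=
  forall t, 0 <= t -> u (t + T) = u t.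

Definition zeno_free (e : R -> R) : Prop :=
  exists sigma_min, 0 < sigma_min /\
    forall t1 t2, 0 <= t1 -> t1 < t2 -> e t1 = 0 -> e t2 = 0 ->
      sigma_min <= t2 - t1.

Definition gci_base (E1 w : R) (t : R) : R := - Rabs (E1 / w) * (cos (w * t) - 1).

(* Main.v *)
Require Import Defs.
From Stdlib Require Import Reals Lra Lia.
From Coquelicot Require Import Coquelicot.
Open Scope R_scope.

Lemma lim_right (g : R -> R) x : continuous g x -> filterlim g (at_right x) (locally (g x)).
Proof. intro H. eapply filterlim_filter_le_1; [apply filter_le_within | exact H]. Qed.
Lemma lim_left (g : R -> R) x : continuous g x -> filterlim g (at_left x) (locally (g x)).
Proof. intro H. eapply filterlim_filter_le_1; [apply filter_le_within | exact H]. Qed.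

Lemma lim_unique_r (f : R -> R) x a b :
  filterlim f (at_right x) (locally a) -> filterlim f (at_right x) (locally b) -> a = b.
Proof.
  intros H1 H2. pose proof (Proper_StrongProper _ (at_right_proper_filter x)).
  exact (filterlim_locally_unique f a b H1 H2).
Qed.
Lemma lim_unique_l (f : R -> R) x a b :
  filterlim f (at_left x) (locally a) -> filterlim f (at_left x) (locally b) -> a = b.
Proof.
  intros H1 H2. pose proof (Proper_StrongProper _ (at_left_proper_filter x)).
  exact (filterlim_locally_unique f a b H1 H2).
Qed.

Lemma const_on (f : R -> R) x y : 
  (forall t, x < t < y -> is_derive f t 0) ->
  forall t1 t2, x < t1 < y -> x < t2 < y -> f t1 = f t2.
Proof.
  intros Hd t1 t2 H1 H2.
  destruct (MVT_gen f t1 t2 (fun _ => 0)) as [c [_ Hc]].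
  - intros z Hz. apply Hd. split.
    + apply Rlt_le_trans with (Rmin t1 t2); [apply Rmin_glb_lt; lra| lra].
    + apply Rle_lt_trans with (Rmax t1 t2); [lra | apply Rmax_lub_lt; lra].
  - intros z Hz. apply continuity_pt_filterlim. apply (ex_derive_continuous (K:=R_AbsRing) (V:=R_NormedModule) f z).
    eexists. apply Hd. split.
    + apply Rlt_le_trans with (Rmin t1 t2); [apply Rmin_glb_lt; lra| lra].
    + apply Rle_lt_trans with (Rmax t1 t2); [lra | apply Rmax_lub_lt; lra].
  - lra.
Qed.

Lemma conv_le w c y : 0 < w -> (c * PI / w <= y <-> c <= w * y / PI).
Proof.
  intros Hw. pose proof PI_RGT_0. split; intro H'.
  - replace c with (c * PI / w * (w / PI)) by (field; lra).
    replace (w * y / PI) with (y * (w / PI)) by (field; lra).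
    apply Rmult_le_compat_r; [left; apply Rdiv_lt_0_compat; lra | lra].
  - replace (c * PI / w) with (c * (PI / w)) by (field; lra).
    replace y with (w * y / PI * (PI / w)) by (field; lra).
    apply Rmult_le_compat_r; [left; apply Rdiv_lt_0_compat; lra | lra].
Qed.

Lemma conv_lt w c y : 0 < w -> (c * PI / w < y <-> c < w * y / PI).
Proof.
  intros Hw. pose proof PI_RGT_0. split; intro H'.
  - replace c with (c * PI / w * (w / PI)) by (field; lra).
    replace (w * y / PI) with (y * (w / PI)) by (field; lra).
    apply Rmult_lt_compat_r; [apply Rdiv_lt_0_compat; lra | lra].
  - replace (c * PI / w) with (c * (PI / w)) by (field; lra).
    replace y with (w * y / PI * (PI / w)) by (field; lra).
    apply Rmult_lt_compat_r; [apply Rdiv_lt_0_compat; lra | lra].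
Qed.

Lemma conv_lt' w c y : 0 < w -> (y < c * PI / w <-> w * y / PI < c).
Proof.
  intros Hw. pose proof PI_RGT_0. split; intro H'.
  - replace c with (c * PI / w * (w / PI)) by (field; lra).
    replace (w * y / PI) with (y * (w / PI)) by (field; lra).
    apply Rmult_lt_compat_r; [apply Rdiv_lt_0_compat; lra | lra].
  - replace (c * PI / w) with (c * (PI / w)) by (field; lra).
    replace y with (w * y / PI * (PI / w)) by (field; lra).
    apply Rmult_lt_compat_r; [apply Rdiv_lt_0_compat; lra | lra].
Qed.

Definition fl (x : R) : Z := (up x - 1)%Z.
Lemma fl_spec x m : IZR m <= x < IZR m + 1 -> fl x = m.
Proof.
  intros H. unfold fl. rewrite <- (tech_up x (m + 1)); [lia | rewrite plus_IZR; lra | rewrite plus_IZR; lra].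
Qed.
Lemma fl_bounds x : IZR (fl x) <= x < IZR (fl x) + 1.
Proof. unfold fl. rewrite minus_IZR. destruct (archimed x). lra. Qed.

Definition SZ (m : Z) := cos (IZR m * PI).
Lemma SZ_succ m : SZ (m + 1) = - SZ m.
Proof. unfold SZ. rewrite plus_IZR, Rmult_plus_distr_r, Rmult_1_l, neg_cos. reflexivity. Qed.
Lemma SZ_pred m : SZ (m - 1) = - SZ m.
Proof. replace m with ((m - 1) + 1)%Z at 2 by lia. rewrite SZ_succ. lra. Qed.
Lemma SZ_2 m : SZ (m + 2) = SZ m.
Proof. replace (m + 2)%Z with ((m + 1) + 1)%Z by lia. rewrite !SZ_succ. lra. Qed.

Definition SN (n : nat) := cos (INR n * PI).
Lemma SN_succ n : SN (S n) = - SN n.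
Proof. unfold SN. rewrite S_INR, Rmult_plus_distr_r, Rmult_1_l, neg_cos. reflexivity. Qed.
Lemma SN_even k : SN (2 * k) = 1.
Proof.
  induction k as [|k IH]. - unfold SN. simpl. rewrite Rmult_0_l. apply cos_0.
  - replace (2 * S k)%nat with (S (S (2 * k))) by lia. rewrite !SN_succ. lra.
Qed.
Lemma SN_odd k : SN (2 * k + 1) = -1.
Proof. replace (2 * k + 1)%nat with (S (2 * k)) by lia. rewrite SN_succ, SN_even. lra. Qed.
Lemma x_nonneg n w : 0 < w -> 0 <= INR n * PI / w.
Proof.
  intros Hw. pose proof PI_RGT_0. unfold Rdiv. apply Rmult_le_pos.
  - apply Rmult_le_pos; [apply pos_INR | lra].
  - left; apply Rinv_0_lt_compat; lra.
Qed.

Lemma input_zero_nat E1 w n : 0 < w -> gci_input E1 w (INR n * PI / w) = 0.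
Proof.
  intros Hw. unfold gci_input. replace (w * (INR n * PI / w)) with (INR n * PI) by (field; lra).
  rewrite sin_eq_0_1; [ring|]. exists (Z.of_nat n). rewrite INR_IZR_INZ. reflexivity.
Qed.

Lemma input_nonzero_nat E1 w n t : 0 < w -> E1 <> 0 ->
  INR n * PI / w < t < (INR n + 1) * PI / w -> gci_input E1 w t <> 0.
Proof.
  intros Hw HE [H1 H2] H. unfold gci_input in H. apply Rmult_integral in H. destruct H as [H|H].
  - apply HE. destruct (Rcase_abs E1); [ rewrite Rabs_left in H | rewrite Rabs_right in H]; lra.
  - apply sin_eq_0_0 in H. destruct H as [k Hk].
    apply (conv_lt w) in H1; [|lra]. apply (conv_lt' w) in H2; [|lra].
    replace (w * t / PI) with (IZR k) in H1, H2 by (rewrite Hk; field; pose proof PI_RGT_0; lra).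
    rewrite INR_IZR_INZ in H1, H2. replace (IZR (Z.of_nat n) + 1) with (IZR (Z.of_nat n + 1)) in H2
      by (rewrite plus_IZR; reflexivity).
    apply lt_IZR in H1. apply lt_IZR in H2. lia.
Qed.

Lemma piece gamma E1 w u n : -1 < gamma < 1 -> 0 < w -> E1 <> 0 ->
  gci_solution gamma (gci_input E1 w) u ->
  exists C, (forall t, INR n * PI / w < t < (INR n + 1) * PI / w ->
                 u t = C - Rabs E1 / w * cos (w * t)) /\
    u (INR n * PI / w) = C - Rabs E1 / w * SN n /\
    u ((INR n + 1) * PI / w) = gamma * (C + Rabs E1 / w * SN n).
Proof.
  intros Hg Hw HE [Hder [Hr Hl]].
  pose proof PI_RGT_0.
  set (a := Rabs E1 / w).
  set (x0 := INR n * PI / w). set (x1 := (INR n + 1) * PI / w).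
  assert (Hx : x0 < x1) by (unfold x0, x1; apply (conv_lt w); [lra|]; 
     replace (w * ((INR n + 1) * PI / w) / PI) with (INR n + 1) by (field; lra); lra).
  assert (HD : forall t, x0 < t < x1 -> is_derive (fun x => u x + a * cos (w * x)) t 0).
  { intros t Ht.
    assert (Hu : is_derive u t (gci_input E1 w t)).
    { apply Hder. pose proof (x_nonneg n w Hw). fold x0 in H0. lra.
      apply (input_nonzero_nat E1 w n); auto. }
    assert (Hc : is_derive (fun x => a * cos (w * x)) t (- Rabs E1 * sin (w * t))).
    { auto_derive; auto. unfold a. field. lra. }
    pose proof (is_derive_plus _ _ _ _ _ Hu Hc) as Hs.
    replace 0 with (plus (gci_input E1 w t) (- Rabs E1 * sin (w * t))).
    exact Hs. unfold gci_input. simpl. unfold plus. simpl. ring. }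
  set (C := u ((x0 + x1) / 2) + a * cos (w * ((x0 + x1) / 2))).
  assert (Hin : forall t, x0 < t < x1 -> u t = C - a * cos (w * t)).
  { intros t Ht. pose proof (const_on _ x0 x1 HD t ((x0 + x1) / 2) Ht) as E.
    simpl in E. unfold C. rewrite <- E by lra. ring. }
  set (g := fun y => C - a * cos (w * y)).
  assert (Hg_cont : forall x, continuous g x).
  { intros x. apply (ex_derive_continuous (K:=R_AbsRing) (V:=R_NormedModule) g x).
    unfold g. auto_derive. auto. }
  exists C. split; [exact Hin|]. split.
  - assert (L1 : filterlim u (at_right x0) (locally (u x0))).
    { apply Hr. apply x_nonneg; lra. apply input_zero_nat; lra. }
    assert (L2 : filterlim u (at_right x0) (locally (g x0))).
    { apply filterlim_ext_loc with g; [| apply lim_right, Hg_cont].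
      unfold at_right, within. apply (locally_interval _ x0 (x0 - 1) x1); simpl; try lra.
      intros y H1 H2 Hy. unfold g. symmetry. apply Hin. lra. }
    rewrite (lim_unique_r _ _ _ _ L1 L2). unfold g, SN. f_equal. f_equal. f_equal.
    unfold x0. field. lra.
  - assert (Hx1 : x1 = INR (S n) * PI / w) by (unfold x1; rewrite S_INR; reflexivity).
    destruct (Hl x1) as [l [L1 E]].
    { pose proof (x_nonneg n w Hw). fold x0 in H0. lra. }
    { rewrite Hx1. apply input_zero_nat; lra. }
    assert (L2 : filterlim u (at_left x1) (locally (g x1))).
    { apply filterlim_ext_loc with g; [| apply lim_left, Hg_cont].
      unfold at_left, within. apply (locally_interval _ x1 x0 (x1 + 1)); simpl; try lra.
      intros y H1 H2 Hy. unfold g. symmetry. apply Hin. lra. }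
    rewrite E, (lim_unique_l _ _ _ _ L1 L2). unfold g.
    replace (w * x1) with (INR (S n) * PI) by (rewrite Hx1; field; lra).
    fold (SN (S n)). rewrite SN_succ. ring.
Qed.
Lemma uniq_formula gamma E1 w u : -1 < gamma < 1 -> 0 < w -> E1 <> 0 ->
  gci_solution gamma (gci_input E1 w) u -> periodic_nonneg (2 * PI / w) u ->
  forall n t, INR n * PI / w <= t < (INR n + 1) * PI / w ->
  u t = - (Rabs E1 / w) * cos (w * t) + Rabs E1 / w * SN n
        - 2 * (Rabs E1 / w) * gamma * SN n / (1 + gamma).
Proof.
  intros Hg Hw HE Hs Hper.
  pose proof PI_RGT_0 as Hpi.
  set (a := Rabs E1 / w).
  set (v := fun n => u (INR n * PI / w)).
  assert (Hv : forall n, v (S n) = gamma * (v n + 2 * a * SN n)).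
  { intros n. destruct (piece gamma E1 w u n Hg Hw HE Hs) as [C [_ [E0 E1']]].
    unfold v. rewrite S_INR, E1', E0. fold a. ring. }
  assert (Hp : forall n, v (S (S n)) = v n).
  { intros n. unfold v. rewrite <- (Hper (INR n * PI / w)) by (apply x_nonneg; lra).
    f_equal. rewrite !S_INR. field. lra. }
  assert (Hval : forall n, v n = -2 * a * gamma * SN n / (1 + gamma)).
  { intros n. pose proof (Hp n) as H. rewrite Hv, Hv, SN_succ in H.
    set (V := v n) in *. set (S0 := SN n) in *.
    apply Rmult_eq_reg_r with ((1 - gamma) * (1 + gamma)).
    2:{ apply Rmult_integral_contrapositive; split; lra. }
    replace (-2 * a * gamma * S0 / (1 + gamma) * ((1 - gamma) * (1 + gamma)))
      with (-2 * a * gamma * S0 * (1 - gamma)) by (field; lra).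
    transitivity (V - gamma * (gamma * (V + 2 * a * S0) + 2 * a * - S0) + -2 * a * gamma * S0 * (1 - gamma)).
    - ring.
    - rewrite (Rminus_diag_eq _ _ (eq_sym H)). ring. }
  intros n t Ht.
  destruct (piece gamma E1 w u n Hg Hw HE Hs) as [C [Hin [E0 _]]].
  fold a in Hin, E0 |- *.
  pose proof (Hval n) as Hn. unfold v in Hn. rewrite E0 in Hn.
  destruct (Req_dec t (INR n * PI / w)) as [Et|Et].
  - rewrite Et, E0. replace (w * (INR n * PI / w)) with (INR n * PI) by (field; lra).
    fold (SN n). lra.
  - rewrite Hin by lra. lra.
Qed.
Definition gm (gamma E1 w : R) (m : Z) (x : R) :=
  - (Rabs E1 / w) * cos (w * x) + Rabs E1 / w * SZ m * ((1 - gamma) / (1 + gamma)).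
Definition usol (gamma E1 w : R) (x : R) := gm gamma E1 w (fl (w * x / PI)) x.

Lemma fl_at w m y : 0 < w -> IZR m * PI / w <= y < (IZR m + 1) * PI / w -> fl (w * y / PI) = m.
Proof.
  intros Hw [H1 H2]. apply fl_spec. apply (conv_le w) in H1; [|exact Hw]. apply (conv_lt' w) in H2; [|exact Hw]. lra.
Qed.

Lemma gm_cont gamma E1 w m x : continuous (gm gamma E1 w m) x.
Proof.
  apply (ex_derive_continuous (K:=R_AbsRing) (V:=R_NormedModule)). unfold gm. auto_derive. auto.
Qed.

Lemma zero_char E1 w t : 0 < w -> E1 <> 0 -> gci_input E1 w t = 0 -> exists m, t = IZR m * PI / w.
Proof.
  intros Hw HE H. unfold gci_input in H. apply Rmult_integral in H. destruct H as [H|H].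
  - exfalso. apply HE. destruct (Rcase_abs E1); [ rewrite Rabs_left in H | rewrite Rabs_right in H]; lra.
  - apply sin_eq_0_0 in H. destruct H as [k Hk]. exists k. rewrite <- Hk. field. lra.
Qed.

Lemma existence gamma E1 w : -1 < gamma < 1 -> 0 < w -> E1 <> 0 ->
  gci_solution gamma (gci_input E1 w) (usol gamma E1 w) /\
  periodic_nonneg (2 * PI / w) (usol gamma E1 w).
Proof.
  intros Hg Hw HE. pose proof PI_RGT_0 as Hpi.
  assert (HP : 0 < PI / w) by (apply Rdiv_lt_0_compat; lra).
  split; [split; [|split]|].
  - intros t Ht He.
    set (m := fl (w * t / PI)).
    pose proof (fl_bounds (w * t / PI)) as [B1 B2]. fold m in B1, B2.
    assert (B1' : IZR m < w * t / PI).
    { destruct B1 as [B1|B1]; auto. exfalso. apply He. unfold gci_input.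
      rewrite sin_eq_0_1; [ring|]. exists m. rewrite B1. field. lra. }
    apply (conv_lt w) in B1'; auto. apply (conv_lt' w) in B2; auto.
    apply is_derive_ext_loc with (gm gamma E1 w m).
    + apply (locally_interval _ t (IZR m * PI / w) ((IZR m + 1) * PI / w)); simpl; auto.
      intros y H1 H2. unfold usol. rewrite (fl_at w m y); auto. lra.
    + unfold gm, gci_input. auto_derive; auto. field. lra.
  - intros t Ht He. destruct (zero_char E1 w t Hw HE He) as [m Hm].
    assert (Hb : IZR m * PI / w <= t < (IZR m + 1) * PI / w).
    { rewrite Hm. split; [lra|]. replace ((IZR m + 1) * PI / w) with (IZR m * PI / w + PI / w) by (field; lra). lra. }
    unfold usol at 2. rewrite (fl_at w m t Hw Hb).
    apply filterlim_ext_loc with (gm gamma E1 w m); [| apply lim_right, gm_cont].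
    unfold at_right, within. apply (locally_interval _ t (t - 1) ((IZR m + 1) * PI / w)); simpl; try lra.
    intros y H1 H2 Hy. unfold usol. rewrite (fl_at w m y); auto. lra.
  - intros t Ht He. destruct (zero_char E1 w t Hw HE He) as [m Hm].
    assert (Hb : IZR m * PI / w <= t < (IZR m + 1) * PI / w).
    { rewrite Hm. split; [lra|]. replace ((IZR m + 1) * PI / w) with (IZR m * PI / w + PI / w) by (field; lra). lra. }
    exists (gm gamma E1 w (m - 1) t). split.
    + apply filterlim_ext_loc with (gm gamma E1 w (m - 1)); [| apply lim_left, gm_cont].
      unfold at_left, within. apply (locally_interval _ t (IZR (m - 1) * PI / w) (t + 1)); simpl; try lra.
      { rewrite minus_IZR, Hm. replace ((IZR m - 1) * PI / w) with (IZR m * PI / w - PI / w) by (field; lra). lra. }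
      intros y H1 H2 Hy. unfold usol. rewrite (fl_at w (m - 1) y); auto.
      rewrite minus_IZR in *. replace (IZR m - 1 + 1) with (IZR m) by ring. lra.
    + unfold usol. rewrite (fl_at w m t Hw Hb). unfold gm. rewrite SZ_pred.
      replace (w * t) with (IZR m * PI) by (rewrite Hm; field; lra). fold (SZ m).
      field. lra.
  - intros t Ht. unfold usol.
    pose proof (fl_bounds (w * t / PI)) as [B1 B2].
    assert (Hf : fl (w * (t + 2 * PI / w) / PI) = (fl (w * t / PI) + 2)%Z).
    { apply fl_spec. rewrite plus_IZR.
      replace (w * (t + 2 * PI / w) / PI) with (w * t / PI + 2) by (field; lra). lra. }
    rewrite Hf. unfold gm. rewrite SZ_2.
    replace (w * (t + 2 * PI / w)) with (w * t + 2 * INR 1 * PI) by (simpl; field; lra).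
    rewrite cos_period. reflexivity.
Qed.

Theorem lemma1 (gamma E1 w : R) :
  -1 < gamma < 1 -> 0 < w ->
  (* open-loop stability: |gamma * exp(A_R delta)| < 1 with A_R = 0 *)
  (forall delta, 0 < delta -> Rabs (gamma * exp (0 * delta)) < 1) ->
  zeno_free (gci_input E1 w) ->
  (exists u, gci_solution gamma (gci_input E1 w) u /\
             periodic_nonneg (2 * PI / w) u) /\
  (forall u, gci_solution gamma (gci_input E1 w) u ->
             periodic_nonneg (2 * PI / w) u ->
   forall (k : nat) (t : R),
     (2 * INR k * PI / w <= t < (2 * INR k + 1) * PI / w ->
        u t = gci_base E1 w t + (- 2 * Rabs E1 * gamma / (gamma + 1) / w)) /\
     ((2 * INR k + 1) * PI / w <= t < (2 * INR k + 2) * PI / w ->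
        u t = gci_base E1 w t + (- 2 * Rabs E1 / (gamma + 1) / w))).
Proof.
  intros Hg Hw _ Hz.
  assert (HE : E1 <> 0).
  { destruct Hz as [s [Hs Hz]]. intro HE0.
    assert (Hc := Hz 0 (s / 2)). unfold gci_input in Hc. rewrite HE0, Rabs_R0 in Hc.
    assert (s <= s / 2 - 0) by (apply Hc; lra). lra. }
  split.
  - exists (usol gamma E1 w). apply existence; auto.
  - intros u Hs Hper k t.
    pose proof (uniq_formula gamma E1 w u Hg Hw HE Hs Hper) as Hf.
    assert (Ha : Rabs (E1 / w) = Rabs E1 / w).
    { rewrite Rabs_div by lra. rewrite (Rabs_pos_eq w) by lra. reflexivity. }
    split; intro Ht.
    + assert (Hb : INR (2 * k) * PI / w <= t < (INR (2 * k) + 1) * PI / w).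
      { replace (INR (2 * k)) with (2 * INR k) by (rewrite mult_INR; simpl; ring). exact Ht. }
      rewrite (Hf _ t Hb), SN_even. unfold gci_base. rewrite Ha. field. lra.
    + assert (Hb : INR (2 * k + 1) * PI / w <= t < (INR (2 * k + 1) + 1) * PI / w).
      { replace (INR (2 * k + 1)) with (2 * INR k + 1) by (rewrite plus_INR, mult_INR; simpl; ring).
        replace (2 * INR k + 1 + 1) with (2 * INR k + 2) by ring. exact Ht. }
      rewrite (Hf _ t Hb), SN_odd. unfold gci_base. rewrite Ha. field. lra.
Qed.
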